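(* Let $T$ be a theory and $\Gamma$ a set of formulas. If $T+\mathrm{IND}(\Gamma)$ is inconsistent, then $\mathrm{GSI}^\omega_\Gamma(\mathit{sk}^\exists(T))$ is inconsistent.
   Context: $\mathit{sk}^\exists$ (existential Skolemization with canonical Skolem symbols $\mathfrak{s}_{Qx\varphi}$, a new function symbol of arity $|\mathrm{FV}(Qx\varphi)|$ for each formula $Qx\varphi$): together with its dual $\mathit{sk}^\forall$, $\mathit{sk}^Q$ fixes atoms, commutes with $\wedge,\vee$, $\mathit{sk}^Q(\neg A)=\neg\mathit{sk}^{\overline Q}(A)$, $\mathit{sk}^Q(QxA(x,\vec y))=\mathit{sk}^Q(A(\mathfrak{s}_{QxA}(\vec y),\vec y))$ ($\vec y$ exactly the free variables of $QxA$), $\mathit{sk}^Q(\overline QxA)=\overline Qx\,\mathit{sk}^Q(A)$; elementwise on theories. $I_x\varphi=\forall\vec z(\varphi(0,\vec z)\wedge\forall x(\varphi(x,\vec z)\to\varphi(s(x),\vec z))\to\forall x\varphi(x,\vec z))$, $\mathrm{IND}(\Gamma)=\{I_x\gamma:\gamma\in\Gamma\}$. $\Gamma\downarrow L=\{\gamma(\vec x,t_1,\dots,t_n):\gamma(\vec x,z_1,\dots,z_n)\in\Gamma,\ t_i$ ground $L$ terms$\}$; $\Delta^-$ = formulas of $\Delta$ with at most one free variable; $\mathrm{GSI}_\Gamma(T)=T+\mathit{sk}^\exists(\mathrm{IND}((\Gamma\downarrow L(T))^-))$, $\mathrm{GSI}^\omega_\Gamma(T)=\bigcup_i\mathrm{GSI}^i_\Gamma(T)$.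 *)

(* Defs.v *)
From mathcomp Require Import all_boot.

Set Implicit Arguments.
Unset Strict Implicit.
Unset Printing Implicit Defensive.

(* A signature: base function symbols (containing 0 and s) and predicate symbols.
   Arities are not enforced syntactically; symbols are interpreted on lists. *)
Record signature := Signature {
  fsym : Type;
  psym : Type;
  sig_zero : fsym;
  sig_succ : fsym
}.

Inductive quant := QAll | QEx.

Definition qdual (q : quant) := match q with QAll => QEx | QEx => QAll end.

Section Syntax.
Variable Sg : signature.

(* Terms and formulas. [Sk q A args] is the canonical Skolem symbol
   s_{q A} (for the formula "q x. A", A with de Bruijn index 0 bound)
   applied to the argument list [args]. *)
Inductive term :=
| Var : nat -> term
| Fn : fsym Sg -> list term -> term
| Sk : quant -> form -> list term -> term
with form :=
| Eq : term -> term -> form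
| Pr : psym Sg -> list term -> form
| Neg : form -> form
| And : form -> form -> form
| Or : form -> form -> form
| All : form -> form
| Ex : form -> form.

Definition Imp (A B : form) : form := Or (Neg A) B.
Definition Qf (q : quant) (A : form) : form :=
  match q with QAll => All A | QEx => Ex A end.

(* renaming and substitution (parallel, capture avoiding, de Bruijn);
   Skolem labels are names and are not touched *)
Fixpoint ren_t (xi : nat -> nat) (t : term) : term :=
  match t with
  | Var n => Var (xi n)
  | Fn f l => Fn f (map (ren_t xi) l)
  | Sk q A l => Sk q A (map (ren_t xi) l)
  end.

Definition up (sigma : nat -> term) (n : nat) : term :=
  match n with 0 => Var 0 | m.+1 => ren_t succn (sigma m) end.

Fixpoint subst_t (sigma : nat -> term) (t : term) : term :=
  match t with
  | Var n => sigma n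
  | Fn f l => Fn f (map (subst_t sigma) l)
  | Sk q A l => Sk q A (map (subst_t sigma) l)
  end.

Fixpoint subst (sigma : nat -> term) (A : form) : form :=
  match A with
  | Eq t u => Eq (subst_t sigma t) (subst_t sigma u)
  | Pr p l => Pr p (map (subst_t sigma) l)
  | Neg B => Neg (subst sigma B)
  | And B C => And (subst sigma B) (subst sigma C)
  | Or B C => Or (subst sigma B) (subst sigma C)
  | All B => All (subst (up sigma) B)
  | Ex B => Ex (subst (up sigma) B)
  end.

Definition scons (t : term) (sigma : nat -> term) (n : nat) : term :=
  match n with 0 => t | m.+1 => sigma m end.

Fixpoint fv_t (t : term) : seq nat :=
  match t with
  | Var n => [:: n]
  | Fn _ l => flatten (map fv_t l)
  | Sk _ _ l => flatten (map fv_t l)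
  end.

Fixpoint fv (A : form) : seq nat :=
  match A with
  | Eq t u => fv_t t ++ fv_t u
  | Pr _ l => flatten (map fv_t l)
  | Neg B => fv B
  | And B C => fv B ++ fv C
  | Or B C => fv B ++ fv C
  | All B => [seq n.-1 | n <- fv B & n != 0]
  | Ex B => [seq n.-1 | n <- fv B & n != 0]
  end.

Definition FV (A : form) : seq nat := sort leq (undup (fv A)).

Definition skterm (q : quant) (A : form) : term :=
  Sk q A [seq Var n | n <- FV (Qf q A)].

(* sk_aux q sigma A = sk^q (A sigma); defined structurally.
   sk^q(q x A) = sk^q(A(s_{qxA}(y))), sk^q(dual x A) = dual x sk^q(A),
   sk^q(~A) = ~ sk^{dual q}(A), commutes with /\, \/, fixes atoms. *)
Fixpoint sk_aux (q : quant) (sigma : nat -> term) (A : form) : form :=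
  match A with
  | Eq _ _ | Pr _ _ => subst sigma A
  | Neg B => Neg (sk_aux (qdual q) sigma B)
  | And B C => And (sk_aux q sigma B) (sk_aux q sigma C)
  | Or B C => Or (sk_aux q sigma B) (sk_aux q sigma C)
  | All B =>
      match q with
      | QAll => sk_aux q (scons (skterm QAll (subst (up sigma) B)) sigma) B
      | QEx => All (sk_aux q (up sigma) B)
      end
  | Ex B =>
      match q with
      | QEx => sk_aux q (scons (skterm QEx (subst (up sigma) B)) sigma) B
      | QAll => Ex (sk_aux q (up sigma) B)
      end
  end.

Definition sk (q : quant) (A : form) : form := sk_aux q Var A.

Definition theory := form -> Prop.

Definition tunion (T U : theory) : theory := fun A => T A \/ U A.
Definition sk_th (q : quant) (T : theory) : theory :=
  fun A => exists B, T B /\ A = sk q B.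

Definition zero_t : term := Fn (sig_zero Sg) [::].
Definition succ_t (t : term) : term := Fn (sig_succ Sg) [:: t].

Fixpoint all_n (n : nat) (A : form) : form :=
  match n with 0 => A | m.+1 => All (all_n m A) end.

(* I_x phi = forall z (phi(0,z) /\ forall x (phi(x,z) -> phi(s x,z)) -> forall x phi(x,z)),
   z = all free variables of phi other than x (universally closed). *)
Definition Ind (x : nat) (phi : form) : form :=
  let phi' := subst (fun n => if n == x then Var 0 else Var n.+1) phi in
  let body :=
    Imp (And (subst (scons zero_t Var) phi')
             (All (Imp phi' (subst (scons (succ_t (Var 0)) (fun n => Var n.+1)) phi'))))
        (All phi') in
  all_n (foldr maxn 0 (map succn (fv body))) body.

Definition IND (G : theory) : theory :=
  fun A => exists x phi, G phi /\ A = Ind x phi.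

Inductive symb := SF of fsym Sg | SS of quant & form.

Fixpoint occ_t (s : symb) (t : term) : Prop :=
  match t with
  | Var _ => False
  | Fn f l => s = SF f \/ foldr (fun u P => occ_t s u \/ P) False l
  | Sk q A l => s = SS q A \/ foldr (fun u P => occ_t s u \/ P) False l
  end.

Fixpoint occ (s : symb) (A : form) : Prop :=
  match A with
  | Eq t u => occ_t s t \/ occ_t s u
  | Pr _ l => foldr (fun u P => occ_t s u \/ P) False l
  | Neg B => occ s B
  | And B C | Or B C => occ s B \/ occ s C
  | All B | Ex B => occ s B
  end.

Definition Lang (T : theory) (s : symb) : Prop :=
  s = SF (sig_zero Sg) \/ s = SF (sig_succ Sg) \/ exists A, T A /\ occ s A.

Fixpoint ground_in (L : symb -> Prop) (t : term) : Prop :=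
  match t with
  | Var _ => False
  | Fn f l => L (SF f) /\ foldr (fun u P => ground_in L u /\ P) True l
  | Sk q A l => L (SS q A) /\ foldr (fun u P => ground_in L u /\ P) True l
  end.

Definition down (G : theory) (L : symb -> Prop) : theory :=
  fun A => exists phi sigma, G phi /\
    (forall n, sigma n = Var n \/ ground_in L (sigma n)) /\ A = subst sigma phi.

Definition minus (D : theory) : theory :=
  fun A => D A /\ size (undup (fv A)) <= 1.

Definition GSI (G T : theory) : theory :=
  tunion T (sk_th QEx (IND (minus (down G (Lang T))))).

Definition GSIw (G T : theory) : theory :=
  fun A => exists i, iter i (GSI G) T A.

End Syntax.

Record model (Sg : signature) := Model {
  dom : Type;
  dom_pt : dom;
  fI : fsym Sg -> list dom -> dom;
  skI : quant -> form Sg -> list dom -> dom;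
  pI : psym Sg -> list dom -> Prop
}.

Section Semantics.
Variables (Sg : signature) (M : model Sg).

Fixpoint eval (rho : nat -> dom M) (t : term Sg) : dom M :=
  match t with
  | Var n => rho n
  | Fn f l => @fI _ M f (map (eval rho) l)
  | Sk q A l => @skI _ M q A (map (eval rho) l)
  end.

Definition dcons (d : dom M) (rho : nat -> dom M) (n : nat) : dom M :=
  match n with 0 => d | m.+1 => rho m end.

Fixpoint sat (rho : nat -> dom M) (A : form Sg) : Prop :=
  match A with
  | Eq t u => eval rho t = eval rho u
  | Pr p l => @pI _ M p (map (eval rho) l)
  | Neg B => ~ sat rho B
  | And B C => sat rho B /\ sat rho C
  | Or B C => sat rho B \/ sat rho C
  | All B => forall d, sat (dcons d rho) B
  | Ex B => exists d, sat (dcons d rho) B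
  end.

Definition models (T : theory Sg) : Prop :=
  forall A, T A -> forall rho, sat rho A.
End Semantics.

Definition inconsistent (Sg : signature) (T : theory Sg) : Prop :=
  ~ exists M : model Sg, models M T.

(* Main.v *)
Require Import Defs.
From mathcomp Require Import all_boot.
From Stdlib Require List.
From Stdlib Require Import Classical FunctionalExtensionality ProofIrrelevance ClassicalEpsilon.

Set Implicit Arguments.
Unset Strict Implicit.

Definition tind (S : signature) (P : term S -> Prop)
  (HV : forall n, P (Var S n))
  (HF : forall f l, List.Forall P l -> P (Fn f l))
  (HS : forall q A l, List.Forall P l -> P (Sk q A l)) : forall t, P t :=
  fix go (t : term S) : P t :=
  match t with
  | Var n => HV n
  | Fn f l => HF f l ((fix gl (l : list (term S)) : List.Forall P l :=
       match l with nil => List.Forall_nil _ | cons u l' => List.Forall_cons _ (go u) (gl l') end) l)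
  | Sk q A l => HS q A l ((fix gl (l : list (term S)) : List.Forall P l :=
       match l with nil => List.Forall_nil _ | cons u l' => List.Forall_cons _ (go u) (gl l') end) l)
  end.

Lemma map_Forall_eq (A B : Type) (f g : A -> B) l :
  List.Forall (fun x => f x = g x) l -> map f l = map g l.
Proof. elim=> //= x l' -> _ ->. by []. Qed.

Section Gen.
Variable S : signature.
Variable M : model S.

Lemma eval_ren (rho : nat -> dom M) xi t :
  eval rho (ren_t xi t) = eval (fun n => rho (xi n)) t.
Proof.
elim/tind: t => [n|f l IH|q A l IH] //=; rewrite -map_comp;
  congr (_ _ _); apply: map_Forall_eq; exact: IH.
Qed.

Lemma eval_subst_t (rho : nat -> dom M) sigma t :
  eval rho (subst_t sigma t) = eval (fun n => eval rho (sigma n)) t.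
Proof.
elim/tind: t => [n|f l IH|q A l IH] //=; rewrite -map_comp;
  congr (_ _ _); apply: map_Forall_eq; exact: IH.
Qed.

Lemma eval_up (rho : nat -> dom M) d sigma :
  (fun n => eval (dcons d rho) (up sigma n)) = dcons d (fun n => eval rho (sigma n)).
Proof.
apply: functional_extensionality => [[|n]] //=. by rewrite eval_ren.
Qed.

Lemma eval_scons (rho : nat -> dom M) t sigma :
  (fun n => eval rho (scons t sigma n)) = dcons (eval rho t) (fun n => eval rho (sigma n)).
Proof. by apply: functional_extensionality => [[|n]]. Qed.

Lemma sat_subst A : forall (rho : nat -> dom M) sigma,
  sat rho (subst sigma A) <-> sat (fun n => eval rho (sigma n)) A.
Proof.
elim: A => [t u|p l|B IH|B IHB C IHC|B IHB C IHC|B IH|B IH] rho sigma /=.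
- by rewrite !eval_subst_t.
- rewrite -map_comp. have -> : (eval rho \o subst_t sigma) = eval (fun n => eval rho (sigma n)).
    by apply: functional_extensionality => t; rewrite /= eval_subst_t.
  by [].
- by rewrite IH.
- by rewrite IHB IHC.
- by rewrite IHB IHC.
- split=> H d; move: (H d); rewrite IH eval_up //.
- split=> [[d H]|[d H]]; exists d; move: H; rewrite IH eval_up //.
Qed.

Lemma sk_sound A : forall q (rho : nat -> dom M) sigma,
  if q is QEx then sat rho (sk_aux QEx sigma A) -> sat (fun n => eval rho (sigma n)) A
  else sat (fun n => eval rho (sigma n)) A -> sat rho (sk_aux QAll sigma A).
Proof.
elim: A => [t u|p l|B IH|B IHB C IHC|B IHB C IHC|B IH|B IH] [] rho sigma /=.
- by move=> H; apply/(sat_subst (Eq t u)).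
- by move=> /(sat_subst (Eq t u)).
- by move=> H; apply/(sat_subst (Pr p l)).
- by move=> /(sat_subst (Pr p l)).
- move=> H1 H2; apply: H1; exact: (IH QEx rho sigma H2).
- move=> H1 H2; apply: H1; exact: (IH QAll rho sigma H2).
- move=> [H1 H2]; split; [exact: (IHB QAll rho sigma H1) | exact: (IHC QAll rho sigma H2)].
- move=> [H1 H2]; split; [exact: (IHB QEx rho sigma H1) | exact: (IHC QEx rho sigma H2)].
- move=> [H1|H2]; [left; exact: (IHB QAll rho sigma H1) | right; exact: (IHC QAll rho sigma H2)].
- move=> [H1|H2]; [left; exact: (IHB QEx rho sigma H1) | right; exact: (IHC QEx rho sigma H2)].
- move=> H; apply: (IH QAll); rewrite eval_scons; exact: H.
- move=> H d; move: (IH QEx (dcons d rho) (up sigma) (H d)); by rewrite eval_up.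
- move=> [d H]; exists d; apply: (IH QAll); by rewrite eval_up.
- move=> H; move: (IH QEx _ _ H); rewrite eval_scons => H'; by eexists; exact: H'.
Qed.

Lemma sk_sound_models (rho : nat -> dom M) A : sat rho (sk QEx A) -> sat rho A.
Proof. move=> H; exact: (sk_sound A QEx rho (Var S) H). Qed.

Lemma all_n_elim n B : (forall rho : nat -> dom M, sat rho (all_n n B)) -> forall rho : nat -> dom M, sat rho B.
Proof.
elim: n => [|n IH] //= H; apply: IH => rho.
have -> : rho = dcons (rho 0) (fun n => rho n.+1) by apply: functional_extensionality => [[|k]].
exact: H.
Qed.

Lemma all_n_intro n B : (forall rho : nat -> dom M, sat rho B) -> forall rho : nat -> dom M, sat rho (all_n n B).
Proof. elim: n => [|n IH] //= H rho d; exact: IH. Qed.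

End Gen.
Section IndSem.
Variable S : signature.
Variable M : model S.

Definition ibody (x : nat) (phi : form S) : form S :=
  let phi' := subst (fun n => if n == x then Var S 0 else Var S n.+1) phi in
  Imp (And (subst (scons (zero_t S) (Var S)) phi')
           (All (Imp phi' (subst (scons (succ_t (Var S 0)) (fun n => Var S n.+1)) phi'))))
      (All phi').

Lemma Ind_eq x phi : Ind x phi = all_n (foldr maxn 0 (map succn (fv (ibody x phi)))) (ibody x phi).
Proof. by []. Qed.

Definition upd (rho : nat -> dom M) x d := fun n => if n == x then d else rho n.
Definition zM : dom M := fI (sig_zero S) [::].
Definition sM (d : dom M) : dom M := fI (sig_succ S) [:: d].

Lemma ibody_sem (rho : nat -> dom M) x A :
  sat rho (ibody x A) <->
  ((sat (upd rho x zM) A /\ forall d, sat (upd rho x d) A -> sat (upd rho x (sM d)) A) ->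
   forall d, sat (upd rho x d) A).
Proof.
set xi := fun n => if n == x then Var S 0 else Var S n.+1.
have K : forall d, sat (dcons d rho) (subst xi A) <-> sat (upd rho x d) A.
  move=> d; rewrite sat_subst.
  have -> : (fun n => eval (dcons d rho) (xi n)) = upd rho x d.
    by apply: functional_extensionality => n; rewrite /xi /upd; case: (n == x).
  by [].
have K0 : sat rho (subst (scons (zero_t S) (Var S)) (subst xi A)) <-> sat (upd rho x zM) A.
  rewrite sat_subst eval_scons -K.
  have -> : (fun n => eval rho (Var S n)) = rho by apply: functional_extensionality.
  by [].
have KS : forall d, sat (dcons d rho) (subst (scons (succ_t (Var S 0)) (fun n => Var S n.+1)) (subst xi A))
   <-> sat (upd rho x (sM d)) A.
  move=> d; rewrite sat_subst eval_scons -K.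
  have -> : (fun n => eval (dcons d rho) (Var S n.+1)) = rho by apply: functional_extensionality.
  by [].
rewrite /ibody /Imp -/xi /=.
split.
- move=> [H|H] [H0 Hs] d.
  + exfalso; apply: H; split; first by apply/K0.
    move=> e; case: (classic (sat (dcons e rho) (subst xi A))) => He; [right | by left].
    apply/KS; apply: Hs; exact/K.
  + exact/K.
- move=> H; case: (classic (sat (upd rho x zM) A /\ forall d, sat (upd rho x d) A -> sat (upd rho x (sM d)) A)).
  + move=> Hc; right => d; apply/K; exact: H.
  + move=> Hc; left => -[H0 Hs]; apply: Hc; split; first exact/K0.
    move=> d Hd; case: (Hs d) => Hs'; first by exfalso; apply: Hs'; apply/K.
    exact/KS.
Qed.

End IndSem.
Section Syn.
Variable S : signature.

Lemma in_flatten_map (A : Type) (f : A -> seq nat) (l : list A) m :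
  m \in flatten (map f l) <-> exists u, List.In u l /\ m \in f u.
Proof.
elim: l => [|u l IH] /=; first by split=> // -[u []].
rewrite mem_cat; split.
- case/orP => [H|/IH [v [Hv Hm]]]; [by exists u; split; [left|] | by exists v; split; [right|]].
- move=> [v [[<-|Hv] Hm]]; first by rewrite Hm.
  by apply/orP; right; apply/IH; exists v.
Qed.

Lemma fv_ren xi (t : term S) : fv_t (ren_t xi t) = map xi (fv_t t).
Proof.
elim/tind: t => [n|f l IH|q A l IH] //=; rewrite map_flatten -!map_comp;
  congr flatten; apply: map_Forall_eq; exact: IH.
Qed.

Lemma fv_subst_t sigma (t : term S) m :
  m \in fv_t (subst_t sigma t) -> exists n, n \in fv_t t /\ m \in fv_t (sigma n).
Proof.
elim/tind: t => [n|f l IH|q A l IH] /=.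
- by move=> H; exists n; rewrite mem_seq1 eqxx.
- rewrite -map_comp => /in_flatten_map [u [Hu Hm]].
  have := proj1 (List.Forall_forall _ _) IH u Hu Hm => -[n [Hn Hn']].
  exists n; split=> //; apply/in_flatten_map; by exists u.
- rewrite -map_comp => /in_flatten_map [u [Hu Hm]].
  have := proj1 (List.Forall_forall _ _) IH u Hu Hm => -[n [Hn Hn']].
  exists n; split=> //; apply/in_flatten_map; by exists u.
Qed.

Lemma fv_subst (A : form S) : forall sigma m,
  m \in fv (subst sigma A) -> exists n, n \in fv A /\ m \in fv_t (sigma n).
Proof.
have Hq : forall B : form S, (forall sigma m, m \in fv (subst sigma B) -> exists n, n \in fv B /\ m \in fv_t (sigma n)) ->
  forall sigma m, m \in [seq n.-1 | n <- fv (subst (up sigma) B) & n != 0] ->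
   exists n, n \in [seq n.-1 | n <- fv B & n != 0] /\ m \in fv_t (sigma n).
  move=> B IH sigma m /mapP [k]; rewrite mem_filter => /andP [Hk0 Hk] ->.
  have [[|n] [Hn Hkn]] := IH _ _ Hk.
    by move: Hkn; rewrite /= mem_seq1 => /eqP Hk'; rewrite Hk' in Hk0.
  move: Hkn; rewrite /= fv_ren => /mapP [j Hj ->].
  exists n; split=> //; apply/mapP; exists n.+1 => //; by rewrite mem_filter.
elim: A => [t u|p l|B IH|B IHB C IHC|B IHB C IHC|B IH|B IH] sigma m /=.
- rewrite mem_cat => /orP [/fv_subst_t [n [Hn H]]|/fv_subst_t [n [Hn H]]];
   exists n; by rewrite mem_cat Hn ?orbT.
- rewrite -map_comp => /in_flatten_map [u [Hu /fv_subst_t [n [Hn H]]]].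
  exists n; split=> //; apply/in_flatten_map; by exists u.
- exact: IH.
- rewrite mem_cat => /orP [/IHB [n [Hn H]]|/IHC [n [Hn H]]];
   exists n; by rewrite mem_cat Hn ?orbT.
- rewrite mem_cat => /orP [/IHB [n [Hn H]]|/IHC [n [Hn H]]];
   exists n; by rewrite mem_cat Hn ?orbT.
- exact: Hq.
- exact: Hq.
Qed.

Lemma ground_fv L (t : term S) : ground_in L t -> fv_t t = [::].
Proof.
elim/tind: t => [n|f l IH|q A l IH] //= [_ H];
elim: l IH H => [|u l IHl] //= /List.Forall_cons_iff [Hu Hl] [Gu Gl];
by rewrite Hu // IHl.
Qed.

Lemma ground_mono (L L' : symb S -> Prop) (t : term S) :
  (forall s, L s -> L' s) -> ground_in L t -> ground_in L' t.
Proof.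
move=> HL.
have Hl : forall l : list (term S), List.Forall (fun t => ground_in L t -> ground_in L' t) l ->
   foldr (fun u P => ground_in L u /\ P) True l -> foldr (fun u P => ground_in L' u /\ P) True l.
  elim=> [|u l IHl] //= /List.Forall_cons_iff [Hu Hl] [Gu Gl]; split; [exact: Hu | exact: IHl].
elim/tind: t => [n|f l IH|q A l IH] //= [H1 H]; split; by [apply: HL | apply: Hl].
Qed.

Lemma ground_occ (L : symb S -> Prop) (t : term S) :
  ground_in L t -> forall s, occ_t s t -> L s.
Proof.
have Hl : forall l : list (term S), List.Forall (fun t => ground_in L t -> forall s, occ_t s t -> L s) l ->
   foldr (fun u P => ground_in L u /\ P) True l -> forall s, foldr (fun u P => occ_t s u \/ P) False l -> L s.
  elim=> [|u l IHl] //= /List.Forall_cons_iff [Hu Hl] [Gu Gl] s [Ho|Ho]; [exact: Hu | exact: IHl].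
elim/tind: t => [n|f l IH|q A l IH] //= [H1 H] s [->|Ho] //; exact: Hl Ho.
Qed.

End Syn.
Section Sub.
Variable S : signature.
Variable M : model S.
Variable L : symb S -> Prop.
Hypothesis HL0 : L (SF (sig_zero S)).

Definition Pd (d : dom M) := exists t, ground_in L t /\ forall rho : nat -> dom M, eval rho t = d.
Definition D := {d : dom M | Pd d}.

Lemma P_list (l : list D) : exists ts : list (term S),
  foldr (fun u P => ground_in L u /\ P) True ts /\ forall rho : nat -> dom M, map (eval rho) ts = map sval l.
Proof.
elim: l => [|[d [t [Gt Et]]] l [ts [Gts Ets]]]; first by exists [::].
exists (t :: ts); split; first by split.
by move=> rho /=; rewrite Et Ets.
Qed.

Lemma z0_pf : Pd (eval (fun _ => dom_pt M) (zero_t S)).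
Proof. by exists (zero_t S); split. Qed.

Definition z0 : D := exist _ _ z0_pf.

Lemma fN_pf f (l : list D) (H : L (SF f)) : Pd (fI f (map sval l)).
Proof.
have [ts [Gts Ets]] := P_list l.
by exists (Fn f ts); split => //= rho; rewrite Ets.
Qed.

Lemma skN_pf q A (l : list D) (H : L (SS q A)) : Pd (skI (m:=M) q A (map sval l)).
Proof.
have [ts [Gts Ets]] := P_list l.
by exists (Sk q A ts); split => //= rho; rewrite Ets.
Qed.

Definition fN f (l : list D) : D :=
  match excluded_middle_informative (L (SF f)) with
  | left H => exist _ _ (fN_pf l H)
  | right _ => z0 end.

Definition skN q A (l : list D) : D :=
  match excluded_middle_informative (L (SS q A)) with
  | left H => exist _ _ (skN_pf l H)
  | right _ => z0 end.

Definition pN p (l : list D) : Prop := pI (m:=M) p (map sval l).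

Definition N : model S := Model z0 fN skN pN.

Lemma sval_inj (a b : D) : sval a = sval b -> a = b.
Proof.
case: a b => [a Ha] [b Hb] /= E; subst b; f_equal; exact: proof_irrelevance.
Qed.

Lemma occ_list s (l : list (term S)) u : List.In u l -> occ_t s u ->
  foldr (fun u P => occ_t s u \/ P) False l.
Proof. elim: l => [|v l IH] //= [->|H] Ho; [by left | by right; apply: IH]. Qed.

Lemma map_agree (rho : nat -> D) (l : list (term S)) :
  List.Forall (fun t => (forall s, occ_t s t -> L s) ->
     sval (eval (M:=N) rho t) = eval (M:=M) (fun n => sval (rho n)) t) l ->
  (forall s, foldr (fun u P => occ_t s u \/ P) False l -> L s) ->
  map sval (map (eval (M:=N) rho) l) = map (eval (M:=M) (fun n => sval (rho n))) l.
Proof.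
move=> HF Ho; rewrite -map_comp; apply: map_Forall_eq.
apply/List.Forall_forall => u Hu /=.
apply: (proj1 (List.Forall_forall _ _) HF u Hu) => s Hs; apply: Ho; exact: occ_list Hu Hs.
Qed.

Lemma eval_agree (rho : nat -> D) t : (forall s, occ_t s t -> L s) ->
  sval (eval (M:=N) rho t) = eval (M:=M) (fun n => sval (rho n)) t.
Proof.
elim/tind: t => [n|f l IH|q A l IH] //= Ho.
- rewrite /fN; case: excluded_middle_informative => [H|H]; last by case: H; apply: Ho; left.
  rewrite /= map_agree //; move=> s Hs; apply: Ho; by right.
- rewrite /skN; case: excluded_middle_informative => [H|H]; last by case: H; apply: Ho; left.
  rewrite /= map_agree //; move=> s Hs; apply: Ho; by right.
Qed.

Lemma eval_ground (rho : nat -> D) t : ground_in L t ->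
  sval (eval (M:=N) rho t) = eval (M:=M) (fun n => sval (rho n)) t.
Proof. move=> G; apply: eval_agree => s; exact: ground_occ. Qed.

Fixpoint univ (b : bool) (A : form S) : bool :=
  match A with
  | Eq _ _ | Pr _ _ => true
  | Neg B => univ (~~ b) B
  | And B C | Or B C => univ b B && univ b C
  | All B => b && univ b B
  | Ex B => ~~ b && univ b B
  end.

Lemma sk_univ A : forall q sigma, univ (if q is QEx then true else false) (sk_aux q sigma A).
Proof.
elim: A => [t u|p l|B IH|B IHB C IHC|B IHB C IHC|B IH|B IH] [] sigma //=;
  by [apply: (IH QEx) | apply: (IH QAll) | rewrite (IHB QEx) (IHC QEx) | rewrite (IHB QAll) (IHC QAll)].
Qed.

Lemma dcons_sval (d : D) (rho : nat -> D) :
  (fun n => sval (dcons (M:=N) d rho n)) = dcons (M:=M) (sval d) (fun n => sval (rho n)).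
Proof. by apply: functional_extensionality => [[|n]]. Qed.

Lemma pres A : forall (rho : nat -> D) b, (forall s, occ s A -> L s) -> univ b A ->
  if b then (sat (M:=M) (fun n => sval (rho n)) A -> sat (M:=N) rho A)
  else (sat (M:=N) rho A -> sat (M:=M) (fun n => sval (rho n)) A).
Proof.
elim: A => [t u|p l|B IH|B IHB C IHC|B IHB C IHC|B IH|B IH] rho b /= Ho Hu.
- have E : sat (M:=M) (fun n => sval (rho n)) (Eq t u) <-> sat (M:=N) rho (Eq t u).
    have Et := @eval_agree rho t (fun s H => Ho s (or_introl H)).
    have Eu := @eval_agree rho u (fun s H => Ho s (or_intror H)).
    rewrite /= -Et -Eu.
    by split => [/sval_inj|->].
  by case: b {Hu} => /=; apply E.
- have E : map sval (map (eval (M:=N) rho) l) = map (eval (M:=M) (fun n => sval (rho n))) l.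
    apply: map_agree => //; apply/List.Forall_forall => u _; exact: eval_agree.
  by rewrite /pN E; case: b {Hu}.
- have := IH rho (~~ b) Ho Hu; case: b {Hu} => /= H1 H2 H3; apply: H2; exact: H1.
- move/andP: Hu => [H1 H2].
  have := IHB rho b (fun s H => Ho s (or_introl H)) H1.
  have := IHC rho b (fun s H => Ho s (or_intror H)) H2.
  by case: b {H1 H2} => /= K1 K2 [X Y]; (split; [apply: K2|apply: K1]).
- move/andP: Hu => [H1 H2].
  have := IHB rho b (fun s H => Ho s (or_introl H)) H1.
  have := IHC rho b (fun s H => Ho s (or_intror H)) H2.
  by case: b {H1 H2} => /= K1 K2 [X|Y]; [left; apply: K2|right; apply: K1|left; apply: K2|right; apply: K1].
- move/andP: Hu => [Hb H1]; rewrite Hb in H1 *.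
  move=> H d; have := IH (dcons (M:=N) d rho) true Ho H1; rewrite dcons_sval; apply; exact: H.
- move/andP: Hu => [Hb H1]; case: b Hb H1 => //= _ H1.
  move=> [d Hd]; exists (sval d); have := IH (dcons (M:=N) d rho) false Ho H1.
  rewrite dcons_sval; apply; exact: Hd.
Qed.

Lemma pres_sk (A : form S) : (forall s, occ s (sk QEx A) -> L s) ->
  (forall rho : nat -> dom M, sat rho (sk QEx A)) -> forall rho : nat -> D, sat (M:=N) rho A.
Proof.
move=> Ho H rho; apply: sk_sound_models.
have := pres (A:=sk QEx A) rho (b:=true) Ho (sk_univ A QEx (Var S)); apply; exact: H.
Qed.

End Sub.
Section Main.
Variables (S : signature) (T G : theory S).

Definition Ti (i : nat) : theory S := iter i (GSI G) (sk_th QEx T).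

Lemma Ti_mono i j A : i <= j -> Ti i A -> Ti j A.
Proof.
elim: j => [|j IH]; first by rewrite leqn0 => /eqP ->.
rewrite leq_eqVlt => /orP [/eqP -> //|Hij] H.
by left; apply: IH.
Qed.

Definition Lw (s : symb S) := exists i, Lang (Ti i) s.

Lemma Lang_mono i j s : i <= j -> Lang (Ti i) s -> Lang (Ti j) s.
Proof.
move=> Hij [H|[H|[A [HA Ho]]]]; [by left|by right; left|].
right; right; exists A; split=> //; exact: Ti_mono Hij HA.
Qed.

Lemma ground_list_mono i j (l : list (term S)) : i <= j ->
  foldr (fun u P => ground_in (Lang (Ti i)) u /\ P) True l ->
  foldr (fun u P => ground_in (Lang (Ti j)) u /\ P) True l.
Proof.
move=> Hij; elim: l => [|u l IH] //= [Hu Hl]; split; last exact: IH.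
apply: ground_mono Hu => s; exact: Lang_mono.
Qed.

Lemma ground_omega t : ground_in Lw t -> exists i, ground_in (Lang (Ti i)) t.
Proof.
have Hl : forall l : list (term S),
  List.Forall (fun t => ground_in Lw t -> exists i, ground_in (Lang (Ti i)) t) l ->
  foldr (fun u P => ground_in Lw u /\ P) True l ->
  exists i, foldr (fun u P => ground_in (Lang (Ti i)) u /\ P) True l.
  elim=> [|u l IHl] /=; first by exists 0.
  move=> /List.Forall_cons_iff [Hu Hl] [Gu Gl].
  have [i Hi] := Hu Gu; have [j Hj] := IHl Hl Gl.
  exists (maxn i j); split.
    apply: ground_mono Hi => s; apply: Lang_mono; exact: leq_maxl.
  apply: ground_list_mono Hj; exact: leq_maxr.
elim/tind: t => [n|f l IH|q A l IH] //= [[i0 H0] Hg]; have [j Hj] := Hl l IH Hg;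
  exists (maxn i0 j); (split; [apply: Lang_mono H0; exact: leq_maxl
                              | apply: ground_list_mono Hj; exact: leq_maxr]).
Qed.

Lemma ground_omega_list (tm : nat -> term S) (s : seq nat) :
  (forall n, ground_in Lw (tm n)) -> exists i, forall n, n \in s -> ground_in (Lang (Ti i)) (tm n).
Proof.
move=> Hg; elim: s => [|n s [j Hj]]; first by exists 0.
have [i Hi] := ground_omega (Hg n).
exists (maxn i j) => k; rewrite in_cons => /orP [/eqP ->|Hk].
  apply: ground_mono Hi => s'; apply: Lang_mono; exact: leq_maxl.
apply: ground_mono (Hj k Hk) => s'; apply: Lang_mono; exact: leq_maxr.
Qed.

Lemma undup_le1 (s : seq nat) x : (forall m, m \in s -> m = x) -> size (undup s) <= 1.
Proof.
move=> H; apply: (@uniq_leq_size _ _ [:: x]); first exact: undup_uniq.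
by move=> m; rewrite mem_undup mem_seq1 => /H ->.
Qed.

End Main.

Theorem proposition13 (S : signature) (T G : theory S) :
  inconsistent (tunion T (IND G)) ->
  inconsistent (GSIw G (sk_th QEx T)).
Proof.
move=> Hinc [M HM]; apply: Hinc.
have HL0 : Lw T G (SF (sig_zero S)) by exists 0; left.
have HMi : forall i F, Ti T G i F -> forall rho, sat (M:=M) rho F.
  move=> i F HF; apply: HM; by exists i.
have HLw : forall i F s, Ti T G i F -> occ s F -> Lw T G s.
  move=> i F s HF Ho; exists i; right; right; by exists F.
exists (N M HL0) => A [HA|[x [phi [HG ->]]]].
- apply: (@pres_sk S M _ HL0 A).
  + move=> s; apply: (HLw 0) => /=; by exists A.
  + apply: (HMi 0) => /=; by exists A.
- move=> rho0; rewrite Ind_eq; apply: all_n_intro => rho.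
  have tmP : forall n, {t : term S | ground_in (Lw T G) t /\ forall r : nat -> dom M, eval r t = sval (rho n)}.
    move=> n; apply: constructive_indefinite_description; exact: (proj2_sig (rho n)).
  set tm := fun n => sval (tmP n).
  have Htm : forall n, ground_in (Lw T G) (tm n) /\ forall r : nat -> dom M, eval r (tm n) = sval (rho n).
    move=> n; exact: (proj2_sig (tmP n)).
  have [i Hi] := ground_omega_list (fv phi) (fun n => proj1 (Htm n)).
  set sigma := fun n => if (n \in fv phi) && (n != x) then tm n else Var S n.
  set psi := subst sigma phi.
  have Hpsi : Ti T G i.+1 (sk QEx (Ind x psi)).
    right; exists (Ind x psi); split=> //; exists x, psi; split=> //; split.
      exists phi, sigma; split=> //; split=> // n; rewrite /sigma.
      case: ifP => [/andP [Hn _]|_]; [right; exact: Hi | by left].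
    apply: (undup_le1 (x:=x)) => m /fv_subst [n [Hn]]; rewrite /sigma Hn /=.
    case: eqP => [-> |_ /=]; first by rewrite mem_seq1 => /eqP.
    by rewrite (ground_fv (proj1 (Htm n))).
  have HN : forall r, sat (M:=N M HL0) r (Ind x psi).
    apply: (@pres_sk S M _ HL0 (Ind x psi)); [move=> s; exact: HLw Hpsi | exact: HMi Hpsi].
  have HNb : sat (M:=N M HL0) rho (ibody x psi).
    move: HN; rewrite Ind_eq => HN; exact: (all_n_elim HN rho).
  have Key : forall d, sat (M:=N M HL0) (upd rho x d) psi <-> sat (M:=N M HL0) (upd rho x d) phi.
    move=> d; rewrite /psi sat_subst.
    have -> : (fun n => eval (M:=N M HL0) (upd rho x d) (sigma n)) = upd rho x d; last by [].
    apply: functional_extensionality => n; rewrite /sigma /upd.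
    case: ifP => [/andP [Hn Hnx]|]; last by [].
    rewrite (negbTE Hnx); apply: sval_inj.
    rewrite (eval_ground HL0 _ (proj1 (Htm n))); exact: (proj2 (Htm n)).
  apply/ibody_sem => -[H0 Hs] d; apply/Key.
  move: HNb => /ibody_sem; apply.
  split; first by apply/Key.
  move=> e /Key He; apply/Key; exact: Hs.
Qed.
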